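(* For all $n\ge 0$, $|F_n(321,2143,4123)|=\binom{n}{2}+1$.
   Context: A permutation $\pi$ avoids a classical pattern $p\in S_k$ if no subsequence of $\pi$ of length $k$ is order-isomorphic to $p$. A Fishburn permutation is a permutation $\pi=\pi_1\cdots\pi_n$ of $[n]$ for which there are no indices $i<j$ with $\pi_j<\pi_i<\pi_{i+1}$ and $\pi_i=\pi_j+1$. $F_n(\sigma_1,\dots,\sigma_k)$ denotes the set of Fishburn permutations of length $n$ avoiding each of the classical patterns $\sigma_1,\dots,\sigma_k$ (with $F_0$ containing only the empty permutation). *)

(* Defs.v *)
From mathcomp Require Import all_boot all_fingroup.
Set Implicit Arguments. Unset Strict Implicit. Unset Printing Implicit Defensive.

(* Permutations of [n] are represented as {perm 'I_n} (values 0..n-1, which is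
   order-isomorphic to [n]); pi_i (1-based) corresponds to s (i-1) (0-based). *)

Definition contains_pattern (n : nat) (s : {perm 'I_n}) (p : seq nat) : Prop :=
  exists f : 'I_(size p) -> 'I_n,
    (forall a b : 'I_(size p), a < b -> f a < f b) /\
    (forall a b : 'I_(size p),
        (s (f a) < s (f b)) = (nth 0 p a < nth 0 p b)).

Definition avoids (n : nat) (s : {perm 'I_n}) (p : seq nat) : Prop :=
  ~ contains_pattern s p.

Definition fishburn (n : nat) (s : {perm 'I_n}) : Prop :=
  ~ exists (i j : 'I_n) (Hi : i.+1 < n),
      [/\ i < j, s j < s i, s i < s (Ordinal Hi) & val (s i) = (s j).+1].

Definition in_F (n : nat) (pats : seq (seq nat)) (s : {perm 'I_n}) : Prop :=
  fishburn s /\ forall p, p \in pats -> avoids s p.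

(* Main.v *)
Require Import Defs.
From mathcomp Require Import all_boot all_fingroup zify.
Set Implicit Arguments. Unset Strict Implicit.


Definition blk (a b i : nat) : nat :=
 if i < a then i
 else if i == a then (if b == a.+1 then a.+1 else a.+2)
 else if i == a.+1 then a
 else if i < b then i.+1
 else if i == b then a.+1
 else i.

Ltac blkt := rewrite /blk; repeat case: ifP; move=> *; lia.

Lemma blk_inj a b x y : a < b -> blk a b x = blk a b y -> x = y.
Proof. move=> ab. rewrite /blk; repeat case: ifP; move=> *; lia. Qed.

Lemma blk_lt a b n x : a < b -> b < n -> x < n -> blk a b x < n.
Proof. move=> *. blkt. Qed.

Lemma count_lt_iota i n : count (fun y => y < i) (iota 0 n) = minn i n.
Proof.
elim: n => [|n IH]; first by rewrite minn0.
rewrite -addn1 iotaD count_cat IH /=. case: ltnP => h; lia.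
Qed.

Lemma count_ltq_iota i q n : i != q ->
  count (fun y => (y < i) || (y == q)) (iota 0 n) = minn i n + ((i < q) && (q < n)).
Proof.
move=> iq; elim: n => [|n IH]; first by rewrite minn0 /= andbF.
rewrite -addn1 iotaD count_cat IH /= addn0.
case: (ltnP n i) => h; case: (eqVneq n q) => h2; subst => /=; try lia.
all: case: (ltnP i q); case: (ltnP q n); case: (ltnP q n.+1); move=> *; lia.
Qed.


Definition pat321 (g : nat -> nat) n := exists i j k,
  [/\ i < j, j < k, k < n, g k < g j & g j < g i].
Definition pat2143 (g : nat -> nat) n := exists i j k l,
  [/\ i < j, j < k, k < l, l < n & [/\ g j < g i, g i < g l & g l < g k]].
Definition pat4123 (g : nat -> nat) n := exists i j k l,
  [/\ i < j, j < k, k < l, l < n & [/\ g j < g k, g k < g l & g l < g i]].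
Definition fishv (g : nat -> nat) n := exists i j,
  [/\ i < j, j < n, i.+1 < n & [/\ g j < g i, g i < g i.+1 & g i = (g j).+1]].

Lemma blk_inv a b x y : a < b -> x < y -> blk a b y < blk a b x ->
  (x = a /\ (y = a.+1 \/ y = b)) \/ (a.+2 <= x < b /\ y = b).
Proof. move=> ? ? h. move: h. rewrite /blk; repeat case: ifP; move=> *; lia. Qed.

Lemma blk_a a b : a.+1 < b -> blk a b a = a.+2.
Proof. move=> *; blkt. Qed.
Lemma blk_a1 a b : a < b -> blk a b a.+1 = a.
Proof. move=> *; blkt. Qed.
Lemma blk_b a b : a.+1 < b -> blk a b b = a.+1.
Proof. move=> *; blkt. Qed.

Lemma blk_321 a b n : a < b -> ~ pat321 (blk a b) n.
Proof.
move=> ab [i [j [k [h1 h2 h3 h4 h5]]]].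
have := blk_inv ab h1 h5; have := blk_inv ab h2 h4; lia.
Qed.

Lemma blk_4123 a b n : a < b -> ~ pat4123 (blk a b) n.
Proof.
move=> ab [i [j [k [l [h1 h2 h3 h4 [h5 h6 h7]]]]]].
have h8 : blk a b j < blk a b i by lia.
have h9 : blk a b k < blk a b i by lia.
have := blk_inv ab h1 h8. have := blk_inv ab (ltn_trans h1 h2) h9.
have := blk_inv ab (ltn_trans h1 (ltn_trans h2 h3)) h7. lia.
Qed.

Lemma blk_2143 a b n : a < b -> ~ pat2143 (blk a b) n.
Proof.
move=> ab [i [j [k [l [h1 h2 h3 h4 [h5 h6 h7]]]]]].
have := blk_inv ab h1 h5; have := blk_inv ab h3 h7.
case=> [[? [?|?]]|[? ?]]; case=> [[? [?|?]]|[? ?]]; subst; try lia.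
move: h6; rewrite blk_a; last lia. rewrite blk_b; last lia. lia.
Qed.

Lemma blk_fish a b n : a < b -> ~ fishv (blk a b) n.
Proof.
move=> ab [i [j [h1 h2 h3 [h4 h5 h6]]]].
have := blk_inv ab h1 h4. case=> [[? _]|[hx ?]]; subst.
  by move: h5; rewrite blk_a1 // /blk; repeat case: ifP; move=> *; lia.
move: h6; rewrite blk_b; last lia. move: hx h5 h4; rewrite /blk; repeat case: ifP; move=> *; lia.
Qed.


Section S.
Variables (n : nat) (g : nat -> nat).
Hypothesis Hr : forall i, i < n -> g i < n.
Hypothesis Hinj : forall i j, i < n -> j < n -> g i = g j -> i = j.
Hypothesis Hsur : forall v, v < n -> exists i, i < n /\ g i = v.

Lemma count_g v : v <= n -> count (fun y => g y < v) (iota 0 n) = v.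
Proof.
move=> vn.
rewrite -(count_map g (fun w => w < v)).
have pe : perm_eq (map g (iota 0 n)) (iota 0 n).
  apply: uniq_perm.
  - rewrite map_inj_in_uniq ?iota_uniq // => x y; rewrite !mem_iota /= !add0n.
    by move=> hx hy /Hinj; apply.
  - exact: iota_uniq.
  - move=> w; rewrite mem_iota /= add0n; apply/idP/idP.
      by move=> /mapP [x]; rewrite mem_iota add0n /= => /Hr + ->.
    move=> /Hsur [x [hx <-]]; apply: map_f; rewrite mem_iota add0n; lia.
rewrite (seq.permP pe) count_lt_iota; lia.
Qed.
End S.


Section S.
Variables (n : nat) (g : nat -> nat).
Hypothesis Hr : forall i, i < n -> g i < n.
Hypothesis Hinj : forall i j, i < n -> j < n -> g i = g j -> i = j.
Hypothesis Hsur : forall v, v < n -> exists i, i < n /\ g i = v.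
Hypothesis N321 : ~ pat321 g n.
Hypothesis N2143 : ~ pat2143 g n.
Hypothesis N4123 : ~ pat4123 g n.
Hypothesis NF : ~ fishv g n.

Lemma gne {y z} : y < n -> z < n -> y != z -> g y != g z.
Proof. move=> hy hz /eqP yz; apply/eqP => e; apply: yz; exact: Hinj e. Qed.

Lemma structure : (forall i, i < n -> g i = i) \/
  exists a b, [/\ a < b, b < n & forall i, i < n -> g i = blk a b i].
Proof.
case: (boolP [exists i : 'I_n, g i != i]) => [/existsP [i0 hi0] | hno]; last first.
  left => i hi. apply/eqP. move/existsPn: hno => /(_ (Ordinal hi)). by rewrite negbK.
right.
have ex : exists i, (i < n) && (g i != i) by exists i0; rewrite ltn_ord.
case: (ex_minnP ex) => a /andP [an ga] amin.
have Hlt : forall i, i < a -> g i = i.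
  move=> i ia; apply/eqP; apply/negPn/negP => h.
  have := amin i; rewrite h (ltn_trans ia an) => /(_ isT); lia.
have F1 : forall y, y < n -> a <= y -> a <= g y.
  move=> y yn ay; case: (leqP a (g y)) => // h.
  have e := Hinj (Hr yn) yn (Hlt _ h). lia.
have gan := Hr an.
have va : a < g a by have := F1 _ an (leqnn a); lia.
have pos : forall w, a <= w -> w < n -> w != g a -> exists z, [/\ a < z, z < n & g z = w].
  move=> w aw wn wga. case: (Hsur wn) => z [zn gz]. exists z; split=> //.
  case: (ltnP a z) => // za. case: (ltnP z a) => h.
    by rewrite Hlt in gz; lia.
  have e : z = a by lia.
  by subst; lia.
have [p [ap pn gp]] : exists z, [/\ a < z, z < n & g z = a].
  by apply: pos => //; lia.
case: (ltnP a.+2 (g a)) => hv.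
  exfalso.
  have [p1 [ap1 p1n gp1]] : exists z, [/\ a < z, z < n & g z = a.+1].
    by apply: pos; lia.
  have [p2 [ap2 p2n gp2]] : exists z, [/\ a < z, z < n & g z = a.+2].
    by apply: pos; lia.
  have h1 : p < p1.
    case: (ltngtP p p1) => // h; last by subst; lia.
    exfalso; apply: N321; exists a, p1, p; repeat split; lia.
  have h2 : p1 < p2.
    case: (ltngtP p1 p2) => // h; last by subst; lia.
    exfalso; apply: N321; exists a, p2, p1; repeat split; lia.
  exfalso; apply: N4123; exists a, p, p1, p2; repeat split; lia.
case: (eqVneq (g a) a.+1) => hv1.
  have ep : p = a.+1.
    case: (eqVneq p a.+1) => // hp. exfalso.
    have hn1 : a.+1 < n by lia.
    have g1 : a.+1 < g a.+1.
      have := F1 _ hn1 (leqnSn a).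
      have := gne hn1 pn (ltac:(lia) : a.+1 != p). have := gne hn1 an (ltac:(lia) : a.+1 != a).
      lia.
    exfalso; apply: NF; exists a, p; repeat split; lia.
  subst p.
  exists a, a.+1; split => // i hi.
  case: (ltnP i a) => hia; first by rewrite Hlt // /blk hia.
  case: (eqVneq i a) => hia2; first by subst; rewrite hv1 /blk ltnn eqxx eqxx.
  case: (eqVneq i a.+1) => hia3; first by subst; rewrite gp blk_a1.
  have -> : blk a a.+1 i = i by rewrite /blk; repeat case: ifP; move=> *; lia.
  have Gi : a.+1 < g i.
    have := F1 _ hi hia. have := gne hi pn hia3. have := gne hi an hia2. lia.
  apply: (etrans _ (_ : count (fun y => y < i) (iota 0 n) = i)); last by rewrite count_lt_iota; lia.
  rewrite -(count_g Hr Hinj Hsur (ltnW (Hr hi))).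
  apply: eq_in_count => y; rewrite mem_iota add0n /= => yn.
  case: (ltnP y a) => hya; first by rewrite Hlt //; lia.
  case: (eqVneq y a) => hya2; first by subst; lia.
  case: (eqVneq y a.+1) => hya3; first by subst; lia.
  have Gy : a.+1 < g y.
    have := F1 _ yn hya. have := gne yn pn hya3. have := gne yn an hya2. lia.
  case: (ltngtP y i) => hyi; last by subst; rewrite ltnn.
    case: (ltngtP (g y) (g i)) => // h.
      exfalso; apply: N2143; exists a, a.+1, y, i; repeat split; lia.
    by move: (gne yn hi (ltac:(lia) : y != i)); rewrite h eqxx.
  apply/negbTE/negP => h. exfalso; apply: N2143; exists a, a.+1, i, y; repeat split; lia.
have hv2 : g a = a.+2 by lia.
have [q [aq qn gq]] : exists z, [/\ a < z, z < n & g z = a.+1].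
  by apply: pos; lia.
have pq : p < q.
  case: (ltngtP p q) => // h; last by subst; lia.
  exfalso; apply: N321; exists a, q, p; repeat split; lia.
have ep : p = a.+1.
  case: (eqVneq p a.+1) => // hp. exfalso.
  have hn1 : a.+1 < n by lia.
  have hq : a.+1 != q by apply/eqP => e; lia.
  have g1 : a.+2 < g a.+1.
    have := F1 _ hn1 (leqnSn a).
    have := gne hn1 pn (ltac:(lia) : a.+1 != p). have := gne hn1 an (ltac:(lia) : a.+1 != a).
    have := gne hn1 qn hq. lia.
  exfalso; apply: NF; exists a, q; repeat split; lia.
subst p.
exists a, q; split => // i hi.
case: (ltnP i a) => hia; first by rewrite Hlt // /blk hia.
case: (eqVneq i a) => hia2; first by subst; rewrite blk_a.
case: (eqVneq i a.+1) => hia3; first by subst; rewrite blk_a1.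
case: (eqVneq i q) => hiq; first by subst; rewrite blk_b.
have -> : blk a q i = i + (i < q) by rewrite /blk; repeat case: ifP; move=> *; lia.
have Gi : a.+2 < g i.
  have := F1 _ hi hia. have := gne hi pn hia3. have := gne hi an hia2. have := gne hi qn hiq. lia.
apply: (etrans _ (_ : count (fun y => (y < i) || (y == q)) (iota 0 n) = i + (i < q))).
  2: by rewrite count_ltq_iota // qn andbT; congr (_ + _); lia.
rewrite -(count_g Hr Hinj Hsur (ltnW (Hr hi))).
apply: eq_in_count => y; rewrite mem_iota add0n /= => yn.
case: (ltnP y a) => hya; first by rewrite Hlt //; lia.
case: (eqVneq y a) => hya2; first by subst; lia.
case: (eqVneq y a.+1) => hya3; first by subst; lia.
case: (eqVneq y q) => hyq; first by subst; rewrite ?orbT; lia.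
rewrite orbF.
have Gy : a.+2 < g y.
  have := F1 _ yn hya. have := gne yn pn hya3. have := gne yn an hya2. have := gne yn qn hyq. lia.
case: (ltngtP y i) => hyi; last by subst; rewrite ltnn.
  case: (ltngtP (g y) (g i)) => // h.
    exfalso; apply: N2143; exists a, a.+1, y, i; repeat split; lia.
  by move: (gne yn hi (ltac:(lia) : y != i)); rewrite h eqxx.
apply/negbTE/negP => h. exfalso; apply: N2143; exists a, a.+1, i, y; repeat split; lia.
Qed.
End S.


Lemma card_pairs n : #|[set p : 'I_n * 'I_n | p.1 < p.2]| = 'C(n, 2).
Proof.
rewrite cardsE -sum1_card.
rewrite -(pair_big_dep xpredT (fun i j : 'I_n => i < j) (fun _ _ => 1)) /=.
rewrite (exchange_big_dep xpredT) /= //.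
rewrite -bin2_sum big_mkord; apply: eq_bigr => j _.
rewrite -(big_ord_widen n (fun _ => 1) (ltnW (ltn_ord j))).
by rewrite sum1_card card_ord.
Qed.


Section P.
Variable n : nat.

Definition gs (s : {perm 'I_n}) (i : nat) : nat :=
  if @insub nat (fun k => k < n) _ i is Some x then val (s x) else i.

Lemma gsE s (x : 'I_n) : gs s x = s x.
Proof. by rewrite /gs valK. Qed.

Lemma gsO s i (hi : i < n) : gs s i = s (Ordinal hi).
Proof. by rewrite -gsE. Qed.

Lemma gs_r s i : i < n -> gs s i < n.
Proof. by move=> hi; rewrite gsO. Qed.

Lemma gs_inj s i j : i < n -> j < n -> gs s i = gs s j -> i = j.
Proof.
move=> hi hj; rewrite (gsO s hi) (gsO s hj) => /val_inj /perm_inj.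
by move/(congr1 val).
Qed.

Lemma gs_sur s v : v < n -> exists i, i < n /\ gs s i = v.
Proof.
move=> hv; exists (s^-1 (Ordinal hv))%g; split => //.
by rewrite gsE permKV.
Qed.

Definition o3 (k : nat) (h : k < 3) : 'I_3 := Ordinal h.
Definition o4 (k : nat) (h : k < 4) : 'I_4 := Ordinal h.

Lemma c321 s : contains_pattern s [:: 3; 2; 1] -> pat321 (gs s) n.
Proof.
case=> f [mono hv].
exists (f (@o3 0 isT)), (f (@o3 1 isT)), (f (@o3 2 isT)); rewrite !gsE.
split; [exact: mono | exact: mono | exact: ltn_ord | by rewrite hv | by rewrite hv].
Qed.

Lemma c2143 s : contains_pattern s [:: 2; 1; 4; 3] -> pat2143 (gs s) n.
Proof.
case=> f [mono hv].
exists (f (@o4 0 isT)), (f (@o4 1 isT)), (f (@o4 2 isT)), (f (@o4 3 isT)); rewrite !gsE.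
split; [exact: mono | exact: mono | exact: mono | exact: ltn_ord | split; by rewrite hv].
Qed.

Lemma c4123 s : contains_pattern s [:: 4; 1; 2; 3] -> pat4123 (gs s) n.
Proof.
case=> f [mono hv].
exists (f (@o4 0 isT)), (f (@o4 1 isT)), (f (@o4 2 isT)), (f (@o4 3 isT)); rewrite !gsE.
split; [exact: mono | exact: mono | exact: mono | exact: ltn_ord | split; by rewrite hv].
Qed.

Lemma mk_contains s (p pos : seq nat) (x0 : 'I_n) :
  size pos = size p -> (forall t, t < size p -> nth 0 pos t < n) ->
  (forall t u, t < u -> u < size p -> nth 0 pos t < nth 0 pos u) ->
  (forall t u, t < size p -> u < size p ->
     (gs s (nth 0 pos t) < gs s (nth 0 pos u)) = (nth 0 p t < nth 0 p u)) ->
  contains_pattern s p.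
Proof.
move=> hs hn hm hv.
exists (fun t => insubd x0 (nth 0 pos t)).
have e : forall t : 'I_(size p), val (insubd x0 (nth 0 pos t)) = nth 0 pos t.
  by move=> t; rewrite val_insubd hn.
split.
  by move=> a b ab; rewrite !e; apply: hm.
by move=> a b; rewrite -!gsE !e hv.
Qed.

Lemma p321 s : pat321 (gs s) n -> contains_pattern s [:: 3; 2; 1].
Proof.
case=> i [j [k [h1 h2 h3 h4 h5]]].
apply: (@mk_contains _ _ [:: i; j; k] (Ordinal h3)) => //.
- by move=> [|[|[|t]]] //= _; lia.
- by move=> [|[|[|t]]] [|[|[|u]]] //= _ _; lia.
- by move=> [|[|[|t]]] [|[|[|u]]] //= _ _; lia.
Qed.

Lemma p2143 s : pat2143 (gs s) n -> contains_pattern s [:: 2; 1; 4; 3].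
Proof.
case=> i [j [k [l [h1 h2 h3 h4 [h5 h6 h7]]]]].
apply: (@mk_contains _ _ [:: i; j; k; l] (Ordinal h4)) => //.
- by move=> [|[|[|[|t]]]] //= _; lia.
- by move=> [|[|[|[|t]]]] [|[|[|[|u]]]] //= _ _; lia.
- by move=> [|[|[|[|t]]]] [|[|[|[|u]]]] //= _ _; lia.
Qed.

Lemma p4123 s : pat4123 (gs s) n -> contains_pattern s [:: 4; 1; 2; 3].
Proof.
case=> i [j [k [l [h1 h2 h3 h4 [h5 h6 h7]]]]].
apply: (@mk_contains _ _ [:: i; j; k; l] (Ordinal h4)) => //.
- by move=> [|[|[|[|t]]]] //= _; lia.
- by move=> [|[|[|[|t]]]] [|[|[|[|u]]]] //= _ _; lia.
- by move=> [|[|[|[|t]]]] [|[|[|[|u]]]] //= _ _; lia.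
Qed.

Lemma fish1 s : fishburn s -> ~ fishv (gs s) n.
Proof.
move=> F [i [j [h1 h2 h3 [h4 h5 h6]]]]; apply: F.
have hi : i < n by lia.
exists (Ordinal hi), (Ordinal h2), h3.
move: h4 h5 h6; rewrite !gsO /= => h4 h5 h6.
by split.
Qed.

Lemma fish2 s : ~ fishv (gs s) n -> fishburn s.
Proof.
move=> F [i [j [Hi [h1 h2 h3 h4]]]]; apply: F.
exists i, j; split => //; rewrite ?gsE ?(gsO s Hi) //.
Qed.
End P.


Section Q.
Variable n : nat.

Definition bf (p : 'I_n * 'I_n) (i : 'I_n) : 'I_n :=
  if p.1 < p.2 then insubd i (blk p.1 p.2 i) else i.

Lemma bf_val (p : 'I_n * 'I_n) (i : 'I_n) : p.1 < p.2 -> val (bf p i) = blk p.1 p.2 i.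
Proof. by move=> h; rewrite /bf h val_insubd blk_lt. Qed.

Lemma bf_inj (p : 'I_n * 'I_n) : injective (bf p).
Proof.
case: (ltnP p.1 p.2) => h; last by move=> x y; rewrite /bf ltnNge h.
move=> x y /(congr1 val); rewrite !bf_val // => /(blk_inj h) e; exact: val_inj.
Qed.

Definition bp (p : 'I_n * 'I_n) : {perm 'I_n} := perm (@bf_inj p).

Lemma gs_bp (p : 'I_n * 'I_n) i : p.1 < p.2 -> i < n -> gs (bp p) i = blk p.1 p.2 i.
Proof. by move=> h hi; rewrite (gsO _ hi) permE bf_val. Qed.

Lemma gs1 i : i < n -> gs (1%g : {perm 'I_n}) i = i.
Proof. by move=> hi; rewrite (gsO _ hi) perm1. Qed.

Definition pairs := [set p : 'I_n * 'I_n | p.1 < p.2].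
Definition AA := (1%g |: [set bp p | p in pairs]).

Lemma tr321 g h : (forall i, i < n -> g i = h i) -> pat321 g n -> pat321 h n.
Proof.
move=> e [i [j [k [h1 h2 h3 h4 h5]]]]; exists i, j, k.
by rewrite -!e //; try lia.
Qed.
Lemma tr2143 g h : (forall i, i < n -> g i = h i) -> pat2143 g n -> pat2143 h n.
Proof.
move=> e [i [j [k [l [h1 h2 h3 h4 [h5 h6 h7]]]]]]; exists i, j, k, l.
by rewrite -!e //; try lia.
Qed.
Lemma tr4123 g h : (forall i, i < n -> g i = h i) -> pat4123 g n -> pat4123 h n.
Proof.
move=> e [i [j [k [l [h1 h2 h3 h4 [h5 h6 h7]]]]]]; exists i, j, k, l.
by rewrite -!e //; try lia.
Qed.
Lemma trF g h : (forall i, i < n -> g i = h i) -> fishv g n -> fishv h n.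
Proof.
move=> e [i [j [h1 h2 h3 [h5 h6 h7]]]]; exists i, j.
by rewrite -!e //; try lia.
Qed.

Definition PATS := [:: [:: 3; 2; 1]; [:: 2; 1; 4; 3]; [:: 4; 1; 2; 3]].

Lemma inF_of (g : nat -> nat) (s : {perm 'I_n}) : (forall i, i < n -> gs s i = g i) ->
  ~ pat321 g n -> ~ pat2143 g n -> ~ pat4123 g n -> ~ fishv g n -> in_F PATS s.
Proof.
move=> e N1 N2 N3 N4; split.
  by apply: fish2 => /(trF e).
move=> p; rewrite !inE => /or3P [] /eqP -> H.
- by apply: N1; apply: tr321 e _; apply: c321.
- by apply: N2; apply: tr2143 e _; apply: c2143.
- by apply: N3; apply: tr4123 e _; apply: c4123.
Qed.

Lemma memAA s : s \in AA <-> in_F PATS s.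
Proof.
split.
  rewrite !inE => /orP [/eqP -> | /imsetP [p]].
    apply: (@inF_of id) => //; first exact: gs1.
    - by case=> [i [j [k [*]]]]; lia.
    - by case=> [i [j [k [l [? ? ? ? [*]]]]]]; lia.
    - by case=> [i [j [k [l [? ? ? ? [*]]]]]]; lia.
    - by case=> [i [j [? ? ? [*]]]]; lia.
  rewrite inE => hp ->.
  apply: (@inF_of (blk p.1 p.2)); first by move=> i; exact: gs_bp.
  - exact: blk_321.
  - exact: blk_2143.
  - exact: blk_4123.
  - exact: blk_fish.
case=> F A.
have N1 : ~ pat321 (gs s) n by move=> H; apply: (A [:: 3; 2; 1]) => //; apply: p321.
have N2 : ~ pat2143 (gs s) n.
  by move=> H; apply: (A [:: 2; 1; 4; 3]); [rewrite !inE eqxx orbT | apply: p2143].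
have N3 : ~ pat4123 (gs s) n.
  by move=> H; apply: (A [:: 4; 1; 2; 3]); [rewrite !inE eqxx !orbT | apply: p4123].
have N4 := fish1 F.
have := structure (@gs_r n s) (@gs_inj n s) (@gs_sur n s) N1 N2 N3 N4.
case=> [H | [a [b [ab bn H]]]]; rewrite !inE.
  apply/orP; left; apply/eqP/permP => x; apply: val_inj.
  by rewrite perm1 /= -gsE H.
apply/orP; right; apply/imsetP.
have an : a < n by lia.
exists (Ordinal an, Ordinal bn); first by rewrite inE.
apply/permP => x; apply: val_inj.
by rewrite /= -!gsE H // gs_bp.
Qed.
End Q.


Lemma blk_lo a b i : i < a -> blk a b i = i.
Proof. by move=> h; rewrite /blk h. Qed.
Lemma blk_hi a b i : a < b -> b < i -> blk a b i = i.
Proof. move=> *; blkt. Qed.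
Lemma blk_ane a b : a < b -> blk a b a != a.
Proof. move=> *; blkt. Qed.
Lemma blk_bne a b : a < b -> blk a b b != b.
Proof. move=> *; blkt. Qed.

Lemma blk_det n a b a' b' : a < b -> b < n -> a' < b' -> b' < n ->
  (forall i, i < n -> blk a b i = blk a' b' i) -> a = a' /\ b = b'.
Proof.
move=> h1 h2 h3 h4 e.
have ea : a = a'.
  case: (ltngtP a a') => // h.
    by have := e a (ltn_trans h1 h2); rewrite (blk_lo b' h) => E; move: (blk_ane h1); rewrite E eqxx.
  by have := e a' (ltn_trans h3 h4); rewrite (blk_lo b h) => E; move: (blk_ane h3); rewrite -E eqxx.
subst a'; split => //.
case: (ltngtP b b') => // h.
  by have := e b' h4; rewrite (blk_hi h1 h) => E; move: (blk_bne h3); rewrite -E eqxx.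
by have := e b h2; rewrite (blk_hi h3 h) => E; move: (blk_bne h1); rewrite E eqxx.
Qed.

Lemma card_AA n : #|AA n| = 'C(n, 2) + 1.
Proof.
rewrite /AA cardsU1 addnC; congr (_ + _); last first.
  apply/eqP; rewrite eqb1; apply/imsetP => -[p]; rewrite inE => hp e.
  have := congr1 (fun s => gs s p.1) e.
  rewrite gs_bp // gs1 // => E. by move: (blk_ane hp); rewrite -E eqxx.
rewrite card_in_imset ?card_pairs // => p q; rewrite !inE => hp hq e.
have := @blk_det n p.1 p.2 q.1 q.2 hp (ltn_ord _) hq (ltn_ord _).
case.
  by move=> i hi; rewrite -gs_bp // e gs_bp.
move=> E1 E2; case: p q {hp hq e} E1 E2 => [x y] [x' y'] /= E1 E2.
by congr pair; apply: val_inj.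
Qed.


Theorem mainTheorem12 (n : nat) :
  exists A : {set {perm 'I_n}},
    (forall s, s \in A <-> in_F [:: [:: 3; 2; 1]; [:: 2; 1; 4; 3]; [:: 4; 1; 2; 3]] s)
    /\ #|A| = 'C(n, 2) + 1.
Proof.
exists (AA n); split; [exact: memAA | exact: card_AA].
Qed.
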